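(* Let $m\le n$ and let $r_1,\dots,r_m$ be positive integers with $n=\sum_{i=1}^m r_i$. For a positive integer $r$, let $\mathbf{1}_r$ denote the column vector of length $r$ with all entries $1$. Let $A=(a_{ij})$ be an $m\times m$ real matrix, and let $M$ be an $n\times n$ real matrix whose rows are divided into consecutive blocks of sizes $r_1,\dots,r_m$, whose $j$-th column, for $1\le j\le m$, is the vector $(a_{1j}\mathbf{1}_{r_1}^\top, a_{2j}\mathbf{1}_{r_2}^\top,\dots,a_{mj}\mathbf{1}_{r_m}^\top)^\top$, and whose remaining $n-m$ columns are arbitrary. Let $N$ be the $n\times n$ matrix with the same last $n-m$ columns as $M$, and whose $j$-th column, for $1\le j\le m$, has $\mathbf{1}_{r_j}$ in the $j$-th row block and zeros in all other row blocks. Then $\det(M)=\det(A)\cdot\det(N)$. *)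

(* Defs.v *)
From mathcomp Require Import all_boot all_order all_algebra.
Set Implicit Arguments. Unset Strict Implicit. Unset Printing Implicit Defensive.
Import Order.TTheory GRing.Theory Num.Theory.

(* Row blocks: rows are numbered 0..n-1; block i (0-based) consists of rows k
   with  r_0 + ... + r_(i-1) <= k < r_0 + ... + r_i. *)
Definition in_block (m : nat) (r : 'I_m -> nat) (i : 'I_m) (k : nat) : bool :=
  (\sum_(l < m | (l < i)%N) r l <= k)%N && (k < \sum_(l < m | (l <= i)%N) r l)%N.

(* Main.v *)
Require Import Defs.
From mathcomp Require Import all_boot all_order all_algebra.
Import Order.TTheory GRing.Theory Num.Theory.
Local Open Scope ring_scope.

Lemma block_uniq m (r : 'I_m -> nat) (i j : 'I_m) k :
  in_block r i k -> in_block r j k -> i = j.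
Proof.
wlog: i j / (i <= j)%N.
  move=> H Hi Hj; case: (leqP i j) => h; first exact: H.
  by apply/esym; apply: H => //; apply: ltnW.
rewrite leq_eqVlt => /orP[/eqP/val_inj //|lij].
case/andP=> _ h1 /andP[h2 _].
have: (\sum_(l < m | (l <= i)%N) r l <= \sum_(l < m | (l < j)%N) r l)%N.
  rewrite [X in (_ <= X)%N](bigID (fun l : 'I_m => (l <= i)%N)) /=.
  apply: leq_trans (leq_addr _ _).
  rewrite [X in (_ <= X)%N](eq_bigl (fun l : 'I_m => (l <= i)%N)) //.
  move=> l /=; case: (boolP (l <= i)%N); rewrite ?andbF ?andbT //.
  by move=> h; apply: leq_ltn_trans lij.
move=> h; have := leq_trans h1 (leq_trans h h2); by rewrite ltnn.
Qed.

Lemma block_ex_aux m (r : 'I_m -> nat) k : forall j : nat,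
  (k < \sum_(l < m | (l < j)%N) r l)%N -> exists i : 'I_m, in_block r i k.
Proof.
elim=> [|j IH].
  by rewrite big_pred0 // => l; rewrite ltn0.
case: (ltnP k (\sum_(l < m | (l < j)%N) r l)) => hk; first by move=> _; apply: IH.
case: (ltnP j m) => hjm.
  pose j0 := Ordinal hjm.
  move=> hk2; exists j0; rewrite /in_block /= hk /=.
  by rewrite (eq_bigl (fun l : 'I_m => (l < j.+1)%N)).
rewrite (eq_bigl (fun l : 'I_m => (l < j)%N)) ?ltnNge ?hk //.
move=> l /=; have h := ltn_ord l.
by rewrite (leq_trans h hjm) (leq_trans h (leq_trans hjm (leqnSn _))).
Qed.

Lemma block_ex m (r : 'I_m -> nat) k :
  (k < \sum_(l < m) r l)%N -> exists i : 'I_m, in_block r i k.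
Proof.
move=> h; apply: (@block_ex_aux m r k m).
by rewrite (eq_bigl (fun _ => true)) // => l; rewrite ltn_ord.
Qed.

Theorem lemma4p5 (R : realFieldType) (m n : nat) (r : 'I_m -> nat)
  (hmn : (m <= n)%N) (hr : forall i, (0 < r i)%N) (hn : n = (\sum_(i < m) r i)%N)
  (A : 'M[R]_m) (M N : 'M[R]_n)
  (hM : forall (k c : 'I_n) (hc : (c < m)%N) (i : 'I_m),
          in_block r i k -> M k c = A i (Ordinal hc))
  (hN1 : forall (k c : 'I_n) (hc : (c < m)%N),
          N k c = if in_block r (Ordinal hc) k then 1 else 0)
  (hN2 : forall (k c : 'I_n), (m <= c)%N -> N k c = M k c) :
  \det M = \det A * \det N.
Proof.
have hex : forall k : 'I_n, exists i : 'I_m, in_block r i k.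
  by move=> k; apply: block_ex; rewrite -hn.
clear hn hr.
move: (subnKC hmn); move: (n - m)%N => n' e; subst n.
have -> : M = N *m block_mx A 0 0 1%:M.
  rewrite -[N]hsubmxK mul_row_block !mulmx0 ?addr0 ?add0r mulmx1.
  rewrite -[M]hsubmxK; congr row_mx; apply/matrixP => k c; rewrite !mxE.
  - have [i hi] := hex k.
    have ord_eq : forall (x : 'I_m) (hx : (lshift n' x < m)%N), Ordinal hx = x.
      by move=> x hx; apply: val_inj.
    rewrite (hM k (lshift n' c) (ltn_ord c) i hi) ord_eq.
    rewrite (bigD1 i) //= big1 ?addr0.
      by rewrite mxE (hN1 k (lshift n' i) (ltn_ord i)) ord_eq hi mul1r.
    move=> j hji; rewrite mxE (hN1 k (lshift n' j) (ltn_ord j)) ord_eq.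
    case: ifP => hj; last by rewrite mul0r.
    exfalso; move/eqP: hji; apply.
    exact: block_uniq hj hi.
  - by symmetry; apply: hN2; rewrite /= leq_addr.
by rewrite det_mulmx det_ublock det1 mulr1 mulrC.
Qed.
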